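(* Let $u\geq 1$, $a=(-u,-1)$, $b=(u,1)$. Consider the following eight open rectangles (''grey cells''): $H_1=(-\infty,-u)\times(0,1)$, $H_2=(-u,0)\times(1,\infty)$, $H_3=(0,u)\times(-\infty,-1)$, $H_4=(u,\infty)\times(-1,0)$, $S_1=(-\infty,-u)\times(1,\infty)$, $S_2=(-u,0)\times(0,1)$, $S_3=(0,u)\times(-1,0)$, $S_4=(u,\infty)\times(-\infty,-1)$. If $C=I\times J$ is one of these cells and $x\in I$, then for each $p\neq 0$ close enough to zero there exists $y_p\in J$ such that $(x,y_p)\in B_p(a,b)$. Moreover, the remaining eight open rectangles of the form $I\times J$ with $I\in\{(-\infty,-u),(-u,0),(0,u),(u,\infty)\}$ and $J\in\{(-\infty,-1),(-1,0),(0,1),(1,\infty)\}$ (''white cells'') contain no point of $B_p(a,b)$ for any $p\neq 0$.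
   Context: For $p\neq 0$ and $(x,y)\in\mathbb{R}^2$ let $L_p((x,y))=(|x|^p+|y|^p)^{1/p}$; for $p<0$ this is extended by setting $L_p((x,y))=0$ whenever $x=0$ or $y=0$. The bisector is $B_p(a,b)=\{q\in\mathbb{R}^2: L_p(a-q)=L_p(b-q)\}$. *)

(* Defs.v *)
From Stdlib Require Import Reals Lra.
Open Scope R_scope.

(* real power with the convention 0^e = 0 (used only for e <> 0) *)
Definition rpow (t e : R) : R := if Req_EM_T t 0 then 0 else Rpower t e.

Definition Lp (p : R) (q : R * R) : R :=
  let (x, y) := q in
  if Rlt_dec p 0 then
    (if Req_EM_T x 0 then 0 else if Req_EM_T y 0 then 0
     else rpow (Rpower (Rabs x) p + Rpower (Rabs y) p) (/ p))
  else rpow (rpow (Rabs x) p + rpow (Rabs y) p) (/ p).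

Definition vsub (a q : R * R) : R * R := (fst a - fst q, snd a - snd q).

Definition in_bisector (p : R) (a b q : R * R) : Prop :=
  Lp p (vsub a q) = Lp p (vsub b q).

Definition Xint (u : R) (i : nat) (x : R) : Prop :=
  match i with
  | 0%nat => x < - u
  | 1%nat => - u < x < 0
  | 2%nat => 0 < x < u
  | _ => u < x
  end.

Definition Yint (j : nat) (y : R) : Prop :=
  match j with
  | 0%nat => y < -1
  | 1%nat => -1 < y < 0
  | 2%nat => 0 < y < 1
  | _ => 1 < y
  end.

(* Grey cells: H1=(0,2), H2=(1,3), H3=(2,0), H4=(3,1),
               S1=(0,3), S2=(1,2), S3=(2,1), S4=(3,0). *)
Definition grey (i j : nat) : Prop :=
  (i = 0 /\ j = 2 \/ i = 1 /\ j = 3 \/ i = 2 /\ j = 0 \/ i = 3 /\ j = 1 \/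
   i = 0 /\ j = 3 \/ i = 1 /\ j = 2 \/ i = 2 /\ j = 1 \/ i = 3 /\ j = 0)%nat.

(* Main.v *)
Require Import Defs.
From Stdlib Require Import Reals Lra Lia Ranalysis5.
Open Scope R_scope.

Lemma cont_ln z : 0 < z -> continuity_pt ln z.
Proof. intro h. apply derivable_continuous_pt. exists (/ z). now apply derivable_pt_lim_ln. Qed.

Lemma cont_P p g z : continuity_pt g z -> g z <> 0 ->
  continuity_pt (fun y => Rpower (Rabs (g y)) p) z.
Proof.
  intros hg hz. unfold Rpower.
  change (continuity_pt (comp exp (comp (fun t => p * t) (comp ln (comp Rabs g)))) z).
  apply continuity_pt_comp.
  - apply continuity_pt_comp; [apply continuity_pt_comp|].
    + apply continuity_pt_comp; [exact hg| apply Rcontinuity_abs].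
    + apply cont_ln. unfold comp. now apply Rabs_pos_lt.
    + apply continuity_pt_mult; [apply derivable_continuous_pt, derivable_pt_const| apply derivable_continuous_pt, derivable_pt_id].
  - apply derivable_continuous_pt. apply derivable_pt_exp.
Qed.

Lemma ivt2 F r s : (forall z, Rmin r s <= z <= Rmax r s -> continuity_pt F z) ->
  F r < 0 -> 0 < F s -> exists z, Rmin r s < z < Rmax r s /\ F z = 0.
Proof.
  intros hc hr hs.
  destruct (Rlt_le_dec r s) as [h|h].
  - rewrite Rmin_left, Rmax_right in hc |- * by lra.
    destruct (IVT_interv F r s hc h hr hs) as [z [hz1 hz2]].
    exists z; split; [|exact hz2]. destruct hz1 as [[a|a] [b|b]]; subst; lra.
  - destruct h as [h|h]; [|subst; lra].
    rewrite Rmin_right, Rmax_left in hc |- * by lra.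
    destruct (IVT_interv (fun y => - F y) s r) as [z [hz1 hz2]]; try lra.
    + intros a ha. apply continuity_pt_opp. now apply hc.
    + exists z; split; [|lra]. destruct hz1 as [[a|a] [b|b]]; subst; lra.
Qed.

Lemma rpow_nz t e : t <> 0 -> rpow t e = Rpower t e.
Proof. intro h. unfold rpow. destruct (Req_EM_T t 0); [contradiction|reflexivity]. Qed.

Lemma Rpower_pos t e : 0 < Rpower t e.
Proof. unfold Rpower; apply exp_pos. Qed.

Lemma Rpower_inj S T e : e <> 0 -> 0 < S -> 0 < T -> Rpower S e = Rpower T e -> S = T.
Proof.
  intros he hS hT h. apply ln_inv; auto.
  apply (f_equal ln) in h. rewrite !ln_Rpower in h.
  apply Rmult_eq_reg_l with e; auto.
Qed.

Lemma bis_iff p X1 Y1 X2 Y2 : p <> 0 -> X1 <> 0 -> Y1 <> 0 -> X2 <> 0 -> Y2 <> 0 ->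
  (Lp p (X1,Y1) = Lp p (X2,Y2) <->
   Rpower (Rabs X1) p + Rpower (Rabs Y1) p = Rpower (Rabs X2) p + Rpower (Rabs Y2) p).
Proof.
  intros hp h1 h2 h3 h4.
  assert (a1 : Rabs X1 <> 0) by (apply Rabs_no_R0; auto).
  assert (a2 : Rabs Y1 <> 0) by (apply Rabs_no_R0; auto).
  assert (a3 : Rabs X2 <> 0) by (apply Rabs_no_R0; auto).
  assert (a4 : Rabs Y2 <> 0) by (apply Rabs_no_R0; auto).
  assert (hip : / p <> 0) by (apply Rinv_neq_0_compat; auto).
  unfold Lp.
  destruct (Rlt_dec p 0).
  - destruct (Req_EM_T X1 0); [contradiction|]. destruct (Req_EM_T Y1 0); [contradiction|].
    destruct (Req_EM_T X2 0); [contradiction|]. destruct (Req_EM_T Y2 0); [contradiction|].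
    assert (q1 := Rpower_pos (Rabs X1) p). assert (q2 := Rpower_pos (Rabs Y1) p).
    assert (q3 := Rpower_pos (Rabs X2) p). assert (q4 := Rpower_pos (Rabs Y2) p).
    rewrite !rpow_nz by lra. split; intro h.
    + eapply Rpower_inj; [exact hip| lra | lra | exact h].
    + now rewrite h.
  - rewrite (rpow_nz (Rabs X1)), (rpow_nz (Rabs Y1)), (rpow_nz (Rabs X2)), (rpow_nz (Rabs Y2)) by auto.
    assert (q1 := Rpower_pos (Rabs X1) p). assert (q2 := Rpower_pos (Rabs Y1) p).
    assert (q3 := Rpower_pos (Rabs X2) p). assert (q4 := Rpower_pos (Rabs Y2) p).
    rewrite !rpow_nz by lra. split; intro h.
    + eapply Rpower_inj; [exact hip| lra | lra | exact h].
    + now rewrite h.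
Qed.

Lemma P_lt_pos a b p : 0 < p -> 0 < a -> a < b -> Rpower a p < Rpower b p.
Proof. intros. unfold Rpower. apply exp_increasing. apply Rmult_lt_compat_l; auto. now apply ln_increasing. Qed.

Lemma P_lt_neg a b p : p < 0 -> 0 < a -> a < b -> Rpower b p < Rpower a p.
Proof. intros. unfold Rpower. apply exp_increasing.
  assert (ln a < ln b) by (now apply ln_increasing). nra. Qed.

Lemma P_gt1 a p : 0 < p -> 1 < a -> 1 < Rpower a p.
Proof. intros. unfold Rpower. rewrite <- exp_0. apply exp_increasing.
  assert (0 < ln a) by (rewrite <- ln_1; apply ln_increasing; lra). nra. Qed.

Lemma P_lt1 a p : p < 0 -> 1 < a -> Rpower a p < 1.
Proof. intros. unfold Rpower. rewrite <- exp_0. apply exp_increasing.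
  assert (0 < ln a) by (rewrite <- ln_1; apply ln_increasing; lra). nra. Qed.

Lemma P_lt1' a p : 0 < p -> 0 < a -> a < 1 -> Rpower a p < 1.
Proof. intros. unfold Rpower. rewrite <- exp_0. apply exp_increasing.
  assert (ln a < 0) by (rewrite <- ln_1; apply ln_increasing; lra). nra. Qed.

Lemma P_inv a p : p <> 0 -> 0 < a -> Rpower (Rpower a (/ p)) p = a.
Proof. intros. rewrite Rpower_mult, Rinv_l by auto. now apply Rpower_1. Qed.

Lemma white p A1 B1 A2 B2 : p <> 0 -> 0 < A1 -> A1 < B1 -> 0 < A2 -> A2 < B2 ->
  Rpower A1 p + Rpower A2 p <> Rpower B1 p + Rpower B2 p.
Proof.
  intros hp. intros. destruct (Rlt_dec p 0).
  - assert (Rpower B1 p < Rpower A1 p) by (apply P_lt_neg; auto).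
    assert (Rpower B2 p < Rpower A2 p) by (apply P_lt_neg; auto). lra.
  - assert (0 < p) by lra.
    assert (Rpower A1 p < Rpower B1 p) by (apply P_lt_pos; auto).
    assert (Rpower A2 p < Rpower B2 p) by (apply P_lt_pos; auto). lra.
Qed.

Lemma small a b : 0 < a -> 0 < b -> exists d, 0 < d /\ d <= 1 /\
  forall p, 0 < p -> p < d -> Rpower b p - Rpower a p < 1.
Proof.
  intros ha hb.
  set (M := Rabs (ln a) + Rabs (ln b) + 1).
  assert (hM : 1 <= M) by (unfold M; pose proof (Rabs_pos (ln a)); pose proof (Rabs_pos (ln b)); lra).
  exists (/ (4 * M)). split; [apply Rinv_0_lt_compat; lra|].
  split. { rewrite <- Rinv_1. apply Rinv_le_contravar; lra. }
  intros p hp hpd.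
  assert (hpM : p * M < 1/4).
  { apply Rmult_lt_compat_r with (r := 4 * M) in hpd; [|lra].
    rewrite Rinv_l in hpd by lra. lra. }
  assert (e1 : p * ln b < 1/4).
  { assert (ln b <= M) by (unfold M; pose proof (Rle_abs (ln b)); pose proof (Rabs_pos (ln a)); lra). nra. }
  assert (e2 : - (1/4) < p * ln a).
  { assert (- M <= ln a) by (unfold M; pose proof (Rabs_pos (ln b)); pose proof (Rle_abs (- ln a)); rewrite Rabs_Ropp in *; lra). nra. }
  unfold Rpower.
  assert (q1 : exp (p * ln b) < exp (1/4)) by (apply exp_increasing; lra).
  assert (q2 : exp (- (1/4)) < exp (p * ln a)) by (apply exp_increasing; lra).
  assert (q3 : 1 + - (1/4) < exp (- (1/4))) by (apply exp_ineq1; lra).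
  assert (q4 : exp (1/4) = / exp (- (1/4))) by (rewrite <- exp_Ropp; f_equal; lra).
  assert (exp (1/4) < 4/3).
  { rewrite q4. replace (4/3) with (/ (3/4)) by field. apply Rinv_lt_contravar; nra. }
  lra.
Qed.

Definition E p al be y := Rpower al p + Rpower (Rabs (-1 - y)) p = Rpower be p + Rpower (Rabs (1 - y)) p.
Definition F p al be y := Rpower al p + Rpower (Rabs (-1 - y)) p - Rpower be p - Rpower (Rabs (1 - y)) p.

Lemma contF p al be z : z <> -1 -> z <> 1 -> continuity_pt (F p al be) z.
Proof.
  intros h1 h2. unfold F.
  apply continuity_pt_minus; [apply continuity_pt_minus|].
  - apply continuity_pt_plus; [apply continuity_pt_const; intros ? ?; reflexivity|].
    apply cont_P; [|lra]. apply continuity_pt_minus; [apply continuity_pt_const; intros ? ?; reflexivity|apply derivable_continuous_pt, derivable_pt_id].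
  - apply continuity_pt_const; intros ? ?; reflexivity.
  - apply cont_P; [|lra]. apply continuity_pt_minus; [apply continuity_pt_const; intros ? ?; reflexivity|apply derivable_continuous_pt, derivable_pt_id].
Qed.

Lemma F0E p al be y : F p al be y = 0 -> E p al be y.
Proof. unfold F, E; lra. Qed.

Lemma sub_bound p v : 0 < p -> p < 1 -> 0 < v ->
  Rpower (2 + v) p <= Rpower v p + 2 * Rpower v (p - 1).
Proof.
  intros hp hp1 hv.
  replace (2 + v) with (v * ((2 + v) / v)) by (field; lra).
  rewrite <- Rpower_mult_distr by (try apply Rdiv_lt_0_compat; lra).
  assert (Rpower ((2 + v) / v) p <= (2 + v) / v).
  { rewrite <- (Rpower_1 ((2+v)/v)) at 2 by (apply Rdiv_lt_0_compat; lra).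
    apply Rle_Rpower; [|lra]. apply Rmult_le_reg_r with v; [lra|].
    unfold Rdiv. rewrite Rmult_assoc, Rinv_l by lra. lra. }
  unfold Rminus. rewrite Rpower_plus, Rpower_Ropp, Rpower_1 by lra.
  assert (hP := Rpower_pos v p).
  assert (Rpower v p * Rpower ((2 + v) / v) p <= Rpower v p * ((2 + v) / v))
    by (apply Rmult_le_compat_l; lra).
  replace (Rpower v p + 2 * (Rpower v p * / v)) with (Rpower v p * ((2 + v) / v)) by (field; lra).
  lra.
Qed.

Lemma absm1 y : -1 < y -> Rabs (-1 - y) = 1 + y.
Proof. intro; rewrite Rabs_left by lra; lra. Qed.
Lemma abs1m y : y < 1 -> Rabs (1 - y) = 1 - y.
Proof. intro; rewrite Rabs_right by lra; lra. Qed.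
Lemma abs1m' y : 1 < y -> Rabs (1 - y) = y - 1.
Proof. intro; rewrite Rabs_left by lra; lra. Qed.

Lemma G al be : 0 < al -> al < be -> exists d, 0 < d /\ forall p, p <> 0 -> Rabs p < d ->
  (exists y, 0 < y < 1 /\ E p al be y) /\ (exists y, 1 < y /\ E p al be y).
Proof.
  intros ha hab.
  destruct (small al be ha ltac:(lra)) as [d [hd [hd1 hs]]].
  exists d; split; [exact hd|]. intros p hp hpd.
  set (a := Rpower al p). set (b := Rpower be p).
  assert (pa : 0 < a) by apply Rpower_pos. assert (pb : 0 < b) by apply Rpower_pos.
  destruct (Rlt_dec p 0) as [hn|hn].
  -
    assert (hba : b < a) by (apply P_lt_neg; auto; lra).
    assert (hip : / p < 0) by (apply Rinv_lt_0_compat; lra).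
    set (w := Rpower (a + 1) (/ p)).
    assert (w0 : 0 < w) by apply Rpower_pos.
    assert (w1 : w < 1) by (apply P_lt1; lra).
    assert (wp : Rpower w p = a + 1) by (apply P_inv; lra).
    split.
    + destruct (ivt2 (F p al be) (1 - w) 0) as [z [hz1 hz2]].
      * intros z hz. rewrite Rmin_right, Rmax_left in hz by lra. apply contF; lra.
      * unfold F. fold a b. rewrite absm1, abs1m by lra. replace (1 - (1 - w)) with w by ring.
        rewrite wp. assert (Rpower (1 + (1 - w)) p < 1) by (apply P_lt1; lra). lra.
      * unfold F. fold a b. rewrite absm1, abs1m by lra. rewrite Rplus_0_r, Rminus_0_r; lra.
      * rewrite Rmin_right, Rmax_left in hz1 by lra. exists z. split; [lra|]. now apply F0E.
    + set (dl := a - b).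
      set (v := Rpower (dl / 2) (/ p)).
      assert (v0 : 0 < v) by apply Rpower_pos.
      assert (vp : Rpower v p = dl / 2) by (apply P_inv; unfold dl; lra).
      destruct (ivt2 (F p al be) (1 + w) (1 + v)) as [z [hz1 hz2]].
      * intros z hz. destruct (Rle_dec (1+w) (1+v)).
        -- rewrite Rmin_left in hz by lra. apply contF; lra.
        -- rewrite Rmin_right in hz by lra. apply contF; lra.
      * unfold F. fold a b. rewrite absm1, abs1m' by lra. replace (1 + w - 1) with w by ring.
        rewrite wp. assert (Rpower (1 + (1 + w)) p < 1) by (apply P_lt1; lra). lra.
      * unfold F. fold a b. rewrite absm1, abs1m' by lra. replace (1 + v - 1) with v by ring.
        rewrite vp. assert (0 < Rpower (1 + (1 + v)) p) by apply Rpower_pos. unfold dl; lra.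
      * exists z. split; [|now apply F0E].
        destruct (Rle_dec (1+w) (1+v)).
        -- rewrite Rmin_left in hz1 by lra. lra.
        -- rewrite Rmin_right in hz1 by lra. lra.
  -
    assert (hp0 : 0 < p) by lra.
    assert (hp1 : p < d) by (rewrite Rabs_right in hpd; lra).
    assert (hab' : a < b) by (apply P_lt_pos; auto).
    assert (hsm : b - a < 1) by (apply hs; lra).
    assert (hip : 0 < / p) by (apply Rinv_0_lt_compat; lra).
    set (t := (1 - b + a) / 2).
    set (w := Rpower t (/ p)).
    assert (w0 : 0 < w) by apply Rpower_pos.
    assert (w1 : w < 1) by (apply P_lt1'; unfold t; lra).
    assert (wp : Rpower w p = t) by (apply P_inv; unfold t; lra).
    split.
    + destruct (ivt2 (F p al be) 0 (1 - w)) as [z [hz1 hz2]].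
      * intros z hz. rewrite Rmin_left, Rmax_right in hz by lra. apply contF; lra.
      * unfold F. fold a b. rewrite absm1, abs1m by lra. rewrite Rplus_0_r, Rminus_0_r; lra.
      * unfold F. fold a b. rewrite absm1, abs1m by lra. replace (1 - (1 - w)) with w by ring.
        rewrite wp. assert (1 < Rpower (1 + (1 - w)) p) by (apply P_gt1; lra). unfold t in *; lra.
      * rewrite Rmin_left, Rmax_right in hz1 by lra. exists z. split; [lra|]. now apply F0E.
    + set (dl := b - a).
      assert (hpd1 : p - 1 <> 0) by lra.
      set (v := Rpower (dl / 4) (/ (p - 1))).
      assert (v0 : 0 < v) by apply Rpower_pos.
      assert (vp : Rpower v (p - 1) = dl / 4) by (apply P_inv; unfold dl; lra).
      destruct (ivt2 (F p al be) (1 + v) (1 + w)) as [z [hz1 hz2]].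
      * intros z hz. pose proof (Rmin_l (1+v) (1+w)); pose proof (Rmin_r (1+v) (1+w)).
        destruct (Rle_dec (1+v) (1+w)).
        -- rewrite Rmin_left in hz by lra. apply contF; lra.
        -- rewrite Rmin_right in hz by lra. apply contF; lra.
      * unfold F. fold a b. rewrite absm1, abs1m' by lra. replace (1 + v - 1) with v by ring.
        assert (Rpower (2 + v) p <= Rpower v p + 2 * Rpower v (p - 1)) by (apply sub_bound; lra).
        replace (1 + (1 + v)) with (2 + v) by ring. rewrite vp in H. unfold dl in *; lra.
      * unfold F. fold a b. rewrite absm1, abs1m' by lra. replace (1 + w - 1) with w by ring.
        rewrite wp. assert (1 < Rpower (1 + (1 + w)) p) by (apply P_gt1; lra). unfold t in *; lra.
      * exists z. split; [|now apply F0E].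
        destruct (Rle_dec (1+v) (1+w)).
        -- rewrite Rmin_left in hz1 by lra. lra.
        -- rewrite Rmin_right in hz1 by lra. lra.
Qed.

Definition bis u p x y := in_bisector p (- u, -1) (u, 1) (x, y).

Lemma bis_eq u p x y : p <> 0 -> x <> -u -> x <> u -> y <> -1 -> y <> 1 ->
  (bis u p x y <-> Rpower (Rabs (-u - x)) p + Rpower (Rabs (-1 - y)) p =
                   Rpower (Rabs (u - x)) p + Rpower (Rabs (1 - y)) p).
Proof.
  intros. unfold bis, in_bisector, vsub; simpl. apply bis_iff; auto; lra.
Qed.

Lemma grey_neg u x : 0 < u -> x < 0 -> x <> - u -> exists d, 0 < d /\ forall p, p <> 0 -> Rabs p < d ->
  (exists y, 0 < y < 1 /\ bis u p x y) /\ (exists y, 1 < y /\ bis u p x y).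
Proof.
  intros hu hx hxu.
  assert (h1 : 0 < Rabs (-u - x)) by (apply Rabs_pos_lt; lra).
  assert (h2 : Rabs (-u - x) < Rabs (u - x)) by (unfold Rabs; repeat destruct Rcase_abs; lra).
  destruct (G _ _ h1 h2) as [d [hd H]]. exists d; split; auto.
  intros p hp hpd. destruct (H p hp hpd) as [[y [hy E1]] [y' [hy' E2]]]. split.
  - exists y; split; auto. apply bis_eq; auto; lra.
  - exists y'; split; auto. apply bis_eq; auto; lra.
Qed.

Lemma grey_pos u x : 0 < u -> 0 < x -> x <> u -> exists d, 0 < d /\ forall p, p <> 0 -> Rabs p < d ->
  (exists y, -1 < y < 0 /\ bis u p x y) /\ (exists y, y < -1 /\ bis u p x y).
Proof.
  intros hu hx hxu.
  assert (h1 : 0 < Rabs (u - x)) by (apply Rabs_pos_lt; lra).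
  assert (h2 : Rabs (u - x) < Rabs (-u - x)) by (unfold Rabs; repeat destruct Rcase_abs; lra).
  destruct (G _ _ h1 h2) as [d [hd H]]. exists d; split; auto.
  intros p hp hpd. destruct (H p hp hpd) as [[y [hy E1]] [y' [hy' E2]]]. unfold E in *. split.
  - exists (- y); split; [lra|]. apply bis_eq; auto; try lra.
    replace (-1 - - y) with (- (1 - y)) by ring. replace (1 - - y) with (- (-1 - y)) by ring.
    rewrite !Rabs_Ropp. lra.
  - exists (- y'); split; [lra|]. apply bis_eq; auto; try lra.
    replace (-1 - - y') with (- (1 - y')) by ring. replace (1 - - y') with (- (-1 - y')) by ring.
    rewrite !Rabs_Ropp. lra.
Qed.

Lemma white_neg u p x y : 0 < u -> p <> 0 -> x < 0 -> y < 0 -> x <> -u -> y <> -1 -> ~ bis u p x y.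
Proof.
  intros. rewrite bis_eq by lra. apply white; auto.
  all: try (apply Rabs_pos_lt; lra). all: unfold Rabs; repeat destruct Rcase_abs; lra.
Qed.

Lemma white_pos u p x y : 0 < u -> p <> 0 -> 0 < x -> 0 < y -> x <> u -> y <> 1 -> ~ bis u p x y.
Proof.
  intros. rewrite bis_eq by lra. intro h.
  apply (white p (Rabs (u - x)) (Rabs (-u - x)) (Rabs (1 - y)) (Rabs (-1 - y))); auto.
  all: try (apply Rabs_pos_lt; lra). all: try (unfold Rabs; repeat destruct Rcase_abs; lra).
Qed.

Theorem lemma1 (u : R) (hu : 1 <= u) :
  let a := (- u, -1) in
  let b := (u, 1) in
  (forall (i j : nat), grey i j ->
     forall x, Xint u i x ->
       exists d, 0 < d /\
         forall p, p <> 0 -> Rabs p < d ->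
           exists y, Yint j y /\ in_bisector p a b (x, y)) /\
  (forall (i j : nat), (i < 4)%nat -> (j < 4)%nat -> ~ grey i j ->
     forall p x y, p <> 0 -> Xint u i x -> Yint j y ->
       ~ in_bisector p a b (x, y)).
Proof.
  intros a b. split.
  - intros i j hg x hx.
    destruct hg as [[-> ->]|[[-> ->]|[[-> ->]|[[-> ->]|[[-> ->]|[[-> ->]|[[-> ->]|[-> ->]]]]]]]];
      simpl in hx.
    + destruct (grey_neg u x) as [d [hd H]]; try lra. exists d; split; auto.
      intros p hp hpd. destruct (H p hp hpd) as [[y ?] _]. exists y; exact H0.
    + destruct (grey_neg u x) as [d [hd H]]; try lra. exists d; split; auto.
      intros p hp hpd. destruct (H p hp hpd) as [_ [y ?]]. exists y; exact H0.
    + destruct (grey_pos u x) as [d [hd H]]; try lra. exists d; split; auto.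
      intros p hp hpd. destruct (H p hp hpd) as [_ [y ?]]. exists y; exact H0.
    + destruct (grey_pos u x) as [d [hd H]]; try lra. exists d; split; auto.
      intros p hp hpd. destruct (H p hp hpd) as [[y ?] _]. exists y; exact H0.
    + destruct (grey_neg u x) as [d [hd H]]; try lra. exists d; split; auto.
      intros p hp hpd. destruct (H p hp hpd) as [_ [y ?]]. exists y; exact H0.
    + destruct (grey_neg u x) as [d [hd H]]; try lra. exists d; split; auto.
      intros p hp hpd. destruct (H p hp hpd) as [[y ?] _]. exists y; exact H0.
    + destruct (grey_pos u x) as [d [hd H]]; try lra. exists d; split; auto.
      intros p hp hpd. destruct (H p hp hpd) as [[y ?] _]. exists y; exact H0.
    + destruct (grey_pos u x) as [d [hd H]]; try lra. exists d; split; auto.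
      intros p hp hpd. destruct (H p hp hpd) as [_ [y ?]]. exists y; exact H0.
  - intros i j hi hj hng p x y hp hx hy.
    destruct i as [|[|[|[|i]]]]; [| | | |lia];
    destruct j as [|[|[|[|j]]]]; try lia; simpl in hx, hy;
    try (exfalso; apply hng; unfold grey; lia).
    all: first [ apply (white_neg u p x y); lra | apply (white_pos u p x y); lra ].
Qed.
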